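(* Let $\alpha>0$ and consider the framed curvature flow with $\theta$-velocity $\upsilon_\theta=\alpha\,\partial_s^2\theta$ (i.e. the extended system below with $\beta=0$ and $f_4\equiv0$). Assume $|\theta_0(u)|<\pi/2$ for all $u\in S^1$. Then any solution $\{(\Gamma_t,\theta_t)\}_{t\in[0,\underline t]}$ satisfies $|\theta(t,u)|<\pi/2$ for all $(t,u)\in[0,\underline t]\times S^1$, and the extended system remains parabolic (i.e. $\cos\theta>0$ throughout).
   Context: $S^1=\mathbb{R}/2\pi\mathbb{Z}$; closed curves $\Gamma_t$ parametrized by $\gamma(t,\cdot):S^1\to\mathbb{R}^3$, $g=\|\partial_u\gamma\|$, $\partial_s=g^{-1}\partial_u$; Frenet frame $T,N,B$, curvature $\kappa$, torsion $\tau$. For an angle function $\theta$, $\nu_\theta=\cos\theta\,N+\sin\theta\,B$. Framed curvature flow: $\partial_t\gamma=\kappa\nu_\theta$ ($=\cos\theta\,\partial_s^2\gamma+\sin\theta\,\partial_s\gamma\times\partial_s^2\gamma$), $\partial_t\theta=\upsilon_\theta$, $\gamma(0)=\gamma_0$, $\theta(0)=\theta_0$. Extended system: with $\hat\gamma=(\gamma_1,\gamma_2,\gamma_3,\theta)$, $\partial_t\hat\gamma=\hat{\mathcal A}\,\partial_s^2\hat\gamma+f(\partial_s\hat\gamma,\hat\gamma)$, where $\hat{\mathcal A}=\begin{bmatrix}\mathcal A&0\\ \beta^T&\alpha\end{bmatrix}$, $\mathcal A=\cos\theta\,\mathbb I+\sin\theta\,[T]_\times$ ($[T]_\times$ the cross-product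 matrix of $T$), $\alpha>0$, $\beta\in\mathbb{R}^3$, so that $\upsilon_\theta=\alpha\partial_s^2\theta+\kappa\langle\beta,N\rangle+f_4(\partial_s\hat\gamma,\hat\gamma)$. The eigenvalues of $\hat{\mathcal A}$ are $\alpha,\cos\theta,e^{\pm i\theta}$; parabolicity requires $\alpha>0$ and $\cos\theta>0$. *)

(* Defs.v *)
From Stdlib Require Import Reals.
From Coquelicot Require Import Coquelicot.
Open Scope R_scope.

Definition vec3 := (R * R * R)%type.
Definition c1 (v : vec3) : R := fst (fst v).
Definition c2 (v : vec3) : R := snd (fst v).
Definition c3 (v : vec3) : R := snd v.

(* A time-dependent closed curve / function on S^1 = R/2piZ is represented by a
   function of (t,u) in R x R which is 2*PI-periodic in u. *)
Definition periodic_u {X : Type} (f : R -> R -> X) : Prop :=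
  forall t u, f t (u + 2 * PI) = f t u.

Definition comp1 (gam : R -> R -> vec3) : R -> R -> R := fun t u => c1 (gam t u).
Definition comp2 (gam : R -> R -> vec3) : R -> R -> R := fun t u => c2 (gam t u).
Definition comp3 (gam : R -> R -> vec3) : R -> R -> R := fun t u => c3 (gam t u).

Definition du (f : R -> R -> R) (t u : R) : R := Derive (f t) u.

Definition speed (gam : R -> R -> vec3) (t u : R) : R :=
  sqrt ((du (comp1 gam) t u) ^ 2 + (du (comp2 gam) t u) ^ 2 + (du (comp3 gam) t u) ^ 2).

Definition ds (gam : R -> R -> vec3) (f : R -> R -> R) : R -> R -> R :=
  fun t u => du f t u / speed gam t u.
Definition ds2 (gam : R -> R -> vec3) (f : R -> R -> R) : R -> R -> R :=
  ds gam (ds gam f).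

Definition reg2_u (gam : R -> R -> vec3) (f : R -> R -> R) (t u : R) : Prop :=
  ex_derive (f t) u /\
  ex_derive (fun u' => Derive (f t) u') u /\
  ex_derive (fun u' => ds gam f t u') u.

(* framed curvature velocity kappa nu_theta
     = cos theta d_s^2 gamma + sin theta (d_s gamma x d_s^2 gamma), componentwise *)
Definition flow_vel1 (gam : R -> R -> vec3) (th : R -> R -> R) (t u : R) : R :=
  let T1 := ds gam (comp1 gam) t u in
  let T2 := ds gam (comp2 gam) t u in
  let T3 := ds gam (comp3 gam) t u in
  let K1 := ds2 gam (comp1 gam) t u in
  let K2 := ds2 gam (comp2 gam) t u in
  let K3 := ds2 gam (comp3 gam) t u in
  cos (th t u) * K1 + sin (th t u) * (T2 * K3 - T3 * K2).
Definition flow_vel2 (gam : R -> R -> vec3) (th : R -> R -> R) (t u : R) : R :=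
  let T1 := ds gam (comp1 gam) t u in
  let T2 := ds gam (comp2 gam) t u in
  let T3 := ds gam (comp3 gam) t u in
  let K1 := ds2 gam (comp1 gam) t u in
  let K2 := ds2 gam (comp2 gam) t u in
  let K3 := ds2 gam (comp3 gam) t u in
  cos (th t u) * K2 + sin (th t u) * (T3 * K1 - T1 * K3).
Definition flow_vel3 (gam : R -> R -> vec3) (th : R -> R -> R) (t u : R) : R :=
  let T1 := ds gam (comp1 gam) t u in
  let T2 := ds gam (comp2 gam) t u in
  let T3 := ds gam (comp3 gam) t u in
  let K1 := ds2 gam (comp1 gam) t u in
  let K2 := ds2 gam (comp2 gam) t u in
  let K3 := ds2 gam (comp3 gam) t u in
  cos (th t u) * K3 + sin (th t u) * (T1 * K2 - T2 * K1).

Definition cont_on_slab (T : R) (f : R -> R -> R) : Prop :=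
  continuous_on (fun p : R * R => 0 <= fst p <= T) (fun p : R * R => f (fst p) (snd p)).

Definition framed_flow_solution (alpha T : R) (gam0 : R -> vec3) (th0 : R -> R)
    (gam : R -> R -> vec3) (th : R -> R -> R) : Prop :=
  periodic_u gam /\ periodic_u th /\
  (forall u, gam 0 u = gam0 u) /\ (forall u, th 0 u = th0 u) /\
  cont_on_slab T (comp1 gam) /\ cont_on_slab T (comp2 gam) /\
  cont_on_slab T (comp3 gam) /\ cont_on_slab T th /\
  (forall t u, 0 <= t <= T -> 0 < speed gam t u) /\
  (forall t u, 0 < t < T ->
     reg2_u gam (comp1 gam) t u /\ reg2_u gam (comp2 gam) t u /\
     reg2_u gam (comp3 gam) t u /\ reg2_u gam th t u) /\
  (forall t u, 0 < t < T ->
     is_derive (fun s => comp1 gam s u) t (flow_vel1 gam th t u) /\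
     is_derive (fun s => comp2 gam s u) t (flow_vel2 gam th t u) /\
     is_derive (fun s => comp3 gam s u) t (flow_vel3 gam th t u) /\
     is_derive (fun s => th s u) t (alpha * ds2 gam th t u)).

(* Main.v *)
Require Import Defs.
From Stdlib Require Import Reals Lra Psatz ZArith Classical ClassicalEpsilon.
From Coquelicot Require Import Coquelicot.
Open Scope R_scope.

Definition ctsS (T : R) (f : R -> R -> R) : Prop :=
  forall t u, 0 <= t <= T -> forall e, 0 < e -> exists d, 0 < d /\
    forall t' u', 0 <= t' <= T -> Rabs (t' - t) < d -> Rabs (u' - u) < d ->
      Rabs (f t' u' - f t u) < e.

Lemma slab_eps T f : cont_on_slab T f -> ctsS T f.
Proof.
  intros H t u Ht e He.
  specialize (H (t,u) Ht).
  assert (L : locally (f t u) (fun y => Rabs (y - f t u) < e)).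
  { exists (mkposreal e He). intros y Hy. exact Hy. }
  specialize (H _ L).
  destruct H as [d Hd].
  exists d. split. apply cond_pos.
  intros t' u' H1 H2 H3.
  apply (Hd (t',u')). split; [exact H2 | exact H3]. exact H1.
Qed.

Lemma ctsS_w T v eps : ctsS T v -> ctsS T (fun t u => v t u - eps * t).
Proof.
  intros H t u Ht e He.
  destruct (H t u Ht (e/2) ltac:(lra)) as [d [Hd Hd']].
  set (k := e / (2 * (Rabs eps + 1))).
  assert (Hk : 0 < k). { unfold k. apply Rdiv_lt_0_compat. lra. pose proof (Rabs_pos eps). lra. }
  exists (Rmin d k). split. apply Rmin_pos; lra.
  intros t' u' H1 H2 H3.
  assert (A := Hd' t' u' H1 (Rlt_le_trans _ _ _ H2 (Rmin_l _ _)) (Rlt_le_trans _ _ _ H3 (Rmin_l _ _))).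
  assert (B : Rabs (t' - t) < k) by (eapply Rlt_le_trans; [exact H2| apply Rmin_r]).
  assert (C : Rabs (eps * t' - eps * t) <= Rabs eps * k).
  { replace (eps * t' - eps * t) with (eps * (t' - t)) by ring.
    rewrite Rabs_mult. apply Rmult_le_compat_l. apply Rabs_pos. lra. }
  assert (D : Rabs eps * k < e / 2).
  { unfold k. pose proof (Rabs_pos eps).
    apply Rmult_lt_reg_r with (2 * (Rabs eps + 1)). lra.
    field_simplify; try lra. }
  replace (v t' u' - eps * t' - (v t u - eps * t)) with ((v t' u' - v t u) - (eps * t' - eps * t)) by ring.
  eapply Rle_lt_trans. apply Rabs_triang_inv2 || apply Rabs_triang. 
  rewrite Rabs_Ropp. lra.
Qed.
Lemma tube T F s a b c : ctsS T F -> 0 <= s <= T ->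
  (forall u, a <= u <= b -> F s u < c) ->
  exists d, 0 < d /\ forall t u, 0 <= t <= T -> Rabs (t - s) < d -> a <= u <= b -> F t u < c.
Proof.
  intros HF Hs Hc.
  assert (Ex : forall u, exists del : posreal, a <= u <= b ->
     forall t' u', 0 <= t' <= T -> Rabs (t' - s) < del -> Rabs (u' - u) < del -> F t' u' < c).
  { intro u. destruct (classic (a <= u <= b)) as [Hu|Hu].
    - destruct (HF s u Hs (c - F s u) ltac:(specialize (Hc u Hu); lra)) as [d [Hd Hd']].
      exists (mkposreal d Hd). intros _ t' u' H1 H2 H3. simpl in *.
      specialize (Hd' t' u' H1 H2 H3). apply Rabs_def2 in Hd'. lra.
    - exists (mkposreal 1 Rlt_0_1). intro; contradiction. }
  set (delta := fun u => proj1_sig (constructive_indefinite_description _ (Ex u))).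
  assert (Hdel : forall u, a <= u <= b ->
     forall t' u', 0 <= t' <= T -> Rabs (t' - s) < delta u -> Rabs (u' - u) < delta u -> F t' u' < c).
  { intro u. unfold delta. destruct (constructive_indefinite_description _ (Ex u)) as [x Hx]. exact Hx. }
  destruct (compactness_value_1d a b delta) as [d Hd].
  exists d. split. apply cond_pos.
  intros t u Ht Hts Hu.
  destruct (classic (F t u < c)) as [K|K]; [exact K|exfalso].
  apply (Hd u Hu). intros [t0 [H0 [H1 H2]]].
  apply K. apply (Hdel t0 H0 t u Ht). lra. exact H1.
Qed.

Lemma per_nat {X : Type} (f : R -> R -> X) : periodic_u f ->
  forall n t u, f t (u + INR n * (2 * PI)) = f t u.
Proof.
  intros H n; induction n as [|n IH]; intros t u.
  - simpl. f_equal. ring.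
  - rewrite S_INR. replace (u + (INR n + 1) * (2 * PI)) with ((u + INR n * (2*PI)) + 2 * PI) by ring.
    rewrite H. apply IH.
Qed.

Lemma per_red {X : Type} (f : R -> R -> X) : periodic_u f ->
  forall t u, exists u', 0 <= u' <= 2 * PI /\ f t u = f t u'.
Proof.
  intros H t u.
  pose proof PI_RGT_0 as Hpi.
  set (z := Int_part (u / (2 * PI))).
  destruct (base_Int_part (u / (2*PI))) as [B1 B2]. fold z in B1, B2.
  exists (u - IZR z * (2 * PI)). split.
  - assert (E : u = (u / (2*PI)) * (2 * PI)) by (field; lra).
    split; nra.
  - destruct (Z_le_gt_dec 0 z) as [Hz|Hz].
    + rewrite <- (Z2Nat.id z Hz). rewrite <- INR_IZR_INZ.
      rewrite <- (per_nat f H (Z.to_nat z) t (u - INR (Z.to_nat z) * (2 * PI))).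
      f_equal. ring.
    + assert (Hz' : (0 <= - z)%Z) by lia.
      replace (IZR z) with (- INR (Z.to_nat (- z))).
      * replace (u - - INR (Z.to_nat (- z)) * (2 * PI)) with (u + INR (Z.to_nat (- z)) * (2 * PI)) by ring.
        symmetry. apply per_nat. exact H.
      * rewrite INR_IZR_INZ, Z2Nat.id by exact Hz'. rewrite opp_IZR. ring.
Qed.

Lemma deriv_sign f x l : is_derive f x l -> l <> 0 ->
  exists del, 0 < del /\ forall h, h <> 0 -> Rabs h < del -> 0 < (f (x + h) - f x) / h * l.
Proof.
  intros H Hl. apply is_derive_Reals in H.
  destruct (H (Rabs l) (Rabs_pos_lt _ Hl)) as [d Hd].
  exists d. split. apply cond_pos. intros h H1 H2.
  specialize (Hd h H1 H2).
  set (q := (f (x + h) - f x) / h) in *.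
  destruct (Rtotal_order 0 l) as [P|[P|P]].
  - rewrite (Rabs_right l) in Hd by lra. apply Rabs_def2 in Hd. nra.
  - subst; lra.
  - rewrite (Rabs_left l) in Hd by lra. apply Rabs_def2 in Hd. nra.
Qed.

Lemma core T a m eps v g :
  0 < a -> 0 < eps -> periodic_u v -> ctsS T v ->
  (forall t u, 0 < t < T -> 0 < g t u) ->
  (forall t u, 0 < t < T -> ex_derive (v t) u /\ ex_derive (fun u' => Derive (v t) u' / g t u') u) ->
  (forall t u, 0 < t < T -> is_derive (fun s => v s u) t
      (a * (Derive (fun u' => Derive (v t) u' / g t u') u / g t u))) ->
  (forall u, v 0 u <= m) ->
  forall t u, 0 <= t < T -> v t u - eps * t < m + eps.
Proof.
  intros Ha Heps Hper Hcts Hg Hreg Htime H0 t0 u0 Ht0.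
  set (c := m + eps). set (w := fun t u => v t u - eps * t).
  change (w t0 u0 < c).
  destruct (classic (w t0 u0 < c)) as [K|K]; [exact K|exfalso].
  apply Rnot_lt_le in K.
  set (E := fun x => 0 <= - x < T /\ exists u, c <= w (- x) u).
  destruct (completeness E) as [l [Hub Hlub]].
  { exists 0. intros x [[Hx _] _]. lra. }
  { exists (- t0). split. rewrite Ropp_involutive. lra. exists u0. rewrite Ropp_involutive. exact K. }
  set (ts := - l).
  assert (HB : forall t, 0 <= t < T -> (exists u, c <= w t u) -> ts <= t).
  { intros t Ht Hex. assert (E (- t)). { split; rewrite Ropp_involutive; assumption. }
    specialize (Hub _ H). unfold ts. lra. }
  assert (HL : forall y, (forall t, 0 <= t < T -> (exists u, c <= w t u) -> y <= t) -> y <= ts).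
  { intros y Hy. assert (l <= - y).
    { apply Hlub. intros x [Hx Hex]. specialize (Hy _ Hx Hex). lra. }
    unfold ts; lra. }
  assert (ts0 : 0 <= ts). { apply HL. intros t Ht _. lra. }
  assert (tsT : ts < T). { assert (ts <= t0) by (apply HB; [lra| exists u0; exact K]). lra. }
  assert (Hwc : ctsS T w) by (apply ctsS_w; exact Hcts).
  assert (Hred : forall t u, exists u', 0 <= u' <= 2 * PI /\ w t u = w t u').
  { intros t u. destruct (per_red v Hper t u) as [u' [Hu' E']]. exists u'. split. exact Hu'.
    unfold w. rewrite E'. reflexivity. }
  assert (HA : forall t u, 0 <= t < ts -> w t u < c).
  { intros t u Ht. destruct (classic (w t u < c)) as [K'|K']; [exact K'|exfalso].
    apply Rnot_lt_le in K'. assert (ts <= t) by (apply HB; [lra | exists u; exact K']). lra. }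
  assert (HBs : exists us, c <= w ts us).
  { destruct (classic (exists us, c <= w ts us)) as [K'|K']; [exact K'|exfalso].
    assert (Hall : forall u, 0 <= u <= 2 * PI -> w ts u < c).
    { intros u _. apply Rnot_le_lt. intro K2. apply K'. exists u. exact K2. }
    destruct (tube T w ts 0 (2 * PI) c Hwc ltac:(lra) Hall) as [d [Hd Hd']].
    assert (ts + d / 2 <= ts).
    { apply HL. intros t Ht [u Hu]. destruct (Rlt_or_le t (ts + d / 2)) as [L|L]; [exfalso|exact L].
      assert (ts <= t) by (apply HB; [exact Ht| exists u; exact Hu]).
      destruct (Hred t u) as [u' [Hu' Eu]].
      assert (w t u' < c). { apply Hd'. lra. rewrite Rabs_right; lra. exact Hu'. }
      rewrite Eu in Hu. lra. }
    lra. }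
  destruct HBs as [us Hus].
  assert (tspos : 0 < ts).
  { destruct ts0 as [P|P]; [exact P|exfalso].
    rewrite <- P in Hus. unfold w in Hus. specialize (H0 us). unfold c in Hus. lra. }
  assert (HC : forall u, w ts u <= c).
  { intro u. destruct (Rle_or_lt (w ts u) c) as [P|P]; [exact P|exfalso].
    destruct (Hwc ts u ltac:(lra) (w ts u - c) ltac:(lra)) as [d [Hd Hd']].
    set (t' := ts - Rmin d ts / 2).
    assert (Hm1 : 0 < Rmin d ts) by (apply Rmin_pos; lra).
    assert (Hm2 : Rmin d ts <= d) by apply Rmin_l.
    assert (Hm3 : Rmin d ts <= ts) by apply Rmin_r.
    specialize (Hd' t' u ltac:(unfold t'; lra)).
    assert (Rabs (t' - ts) < d) by (unfold t'; rewrite Rabs_left; lra).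
    specialize (Hd' H). rewrite Rminus_diag, Rabs_R0 in Hd'. specialize (Hd' Hd).
    apply Rabs_def2 in Hd'.
    specialize (HA t' u ltac:(unfold t'; lra)). lra. }
  assert (Hts : 0 < ts < T) by lra.
  set (f := v ts).
  assert (hmax : forall u, f u <= f us).
  { intro u. specialize (HC u). unfold w in HC, Hus. unfold f. lra. }
  assert (Hex : forall u, ex_derive f u) by (intro u; exact (proj1 (Hreg ts u Hts))).
  assert (h0 : Derive f us = 0).
  { destruct (Req_dec (Derive f us) 0) as [P|P]; [exact P|exfalso].
    destruct (deriv_sign f us (Derive f us) (Derive_correct _ _ (Hex us)) P) as [d [Hd Hd']].
    set (l0 := Derive f us) in *.
    destruct (Rlt_or_le 0 l0) as [Q|Q].
    - specialize (Hd' (d/2) ltac:(lra) ltac:(rewrite Rabs_right; lra)).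
      specialize (hmax (us + d/2)).
      set (q := (f (us + d/2) - f us) / (d/2)) in *.
      assert (f (us + d/2) - f us = q * (d/2)) by (unfold q; field; lra).
      nra.
    - assert (Q' : l0 < 0) by lra.
      specialize (Hd' (-(d/2)) ltac:(lra) ltac:(rewrite Rabs_left; lra)).
      specialize (hmax (us + -(d/2))).
      set (q := (f (us + -(d/2)) - f us) / (-(d/2))) in *.
      assert (f (us + -(d/2)) - f us = q * (-(d/2))) by (unfold q; field; lra).
      nra. }
  set (qf := fun u' => Derive f u' / g ts u').
  assert (hq : Derive qf us <= 0).
  { destruct (Rle_or_lt (Derive qf us) 0) as [P|P]; [exact P|exfalso].
    destruct (deriv_sign qf us (Derive qf us) (Derive_correct _ _ (proj2 (Hreg ts us Hts))) ltac:(lra))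
      as [d [Hd Hd']].
    assert (qus : qf us = 0) by (unfold qf; rewrite h0; unfold Rdiv; ring).
    assert (pos : forall x, us < x < us + d -> 0 < Derive f x).
    { intros x Hx. specialize (Hd' (x - us) ltac:(lra) ltac:(rewrite Rabs_right; lra)).
      replace (us + (x - us)) with x in Hd' by ring. rewrite qus in Hd'.
      assert (Gx := Hg ts x Hts).
      assert (0 < qf x).
      { set (Q := Derive qf us) in *. set (y := qf x) in *.
        assert (0 < (y - 0) / (x - us)).
        { apply Rmult_lt_reg_r with Q. lra. rewrite Rmult_0_l. exact Hd'. }
        replace ((y - 0) / (x - us)) with (y * / (x - us)) in H by (unfold Rdiv; ring).
        assert (0 < / (x - us)) by (apply Rinv_0_lt_compat; lra). nra. }
      unfold qf in H.
      assert (Derive f x = Derive f x / g ts x * g ts x) by (field; lra). nra. }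
    destruct (MVT_cor2 f (Derive f) us (us + d/2) ltac:(lra)) as [cc [Ecc Hcc]].
    { intros cc _. apply is_derive_Reals. apply Derive_correct. apply Hex. }
    specialize (pos cc ltac:(lra)). specialize (hmax (us + d/2)). nra. }
  assert (Ht := Htime ts us Hts). apply is_derive_Reals in Ht.
  fold f in Ht. fold qf in Ht.
  set (D := a * (Derive qf us / g ts us)) in *.
  assert (HD : D <= 0).
  { unfold D. assert (Gx := Hg ts us Hts).
    assert (0 < / g ts us) by (apply Rinv_0_lt_compat; lra).
    unfold Rdiv. set (Q := Derive qf us) in *. set (G := / g ts us) in *.
    assert (Q * G <= 0) by nra. nra. }
  destruct (Ht eps Heps) as [d Hd].
  assert (Hdp := cond_pos d).
  set (h := - (Rmin d ts / 2)).
  assert (Hm1 : 0 < Rmin d ts) by (apply Rmin_pos; lra).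
  assert (Hm2 : Rmin d ts <= d) by apply Rmin_l.
  assert (Hm3 : Rmin d ts <= ts) by apply Rmin_r.
  specialize (Hd h ltac:(unfold h; lra) ltac:(unfold h; rewrite Rabs_left; lra)).
  apply Rabs_def2 in Hd. cbv beta in Hd.
  set (Dl := v (ts + h) us - v ts us) in *.
  assert (hneg : h < 0) by (unfold h; lra).
  assert (EDl : Dl = Dl / h * h) by (field; lra).
  set (qq := Dl / h) in *.
  assert (qq < D + eps) by lra.
  assert (Dl > (D + eps) * h) by nra.
  specialize (HA (ts + h) us ltac:(unfold h; lra)).
  unfold w in HA, Hus. unfold Dl in *. nra.
Qed.

Lemma wmp T a m v g :
  0 < a -> periodic_u v -> ctsS T v ->
  (forall t u, 0 < t < T -> 0 < g t u) ->
  (forall t u, 0 < t < T -> ex_derive (v t) u /\ ex_derive (fun u' => Derive (v t) u' / g t u') u) ->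
  (forall t u, 0 < t < T -> is_derive (fun s => v s u) t
      (a * (Derive (fun u' => Derive (v t) u' / g t u') u / g t u))) ->
  (forall u, v 0 u <= m) ->
  forall t u, 0 <= t <= T -> v t u <= m.
Proof.
  intros Ha Hper Hcts Hg Hreg Htime H0.
  assert (Hlt : forall t u, 0 <= t < T -> v t u <= m).
  { intros t u Ht. apply Rnot_lt_le. intro K.
    set (eps := (v t u - m) / (2 * (1 + t))).
    assert (Heps : 0 < eps) by (unfold eps; apply Rdiv_lt_0_compat; lra).
    pose proof (core T a m eps v g Ha Heps Hper Hcts Hg Hreg Htime H0 t u Ht).
    assert (eps * (1 + t) = (v t u - m) / 2) by (unfold eps; field; lra).
    nra. }
  intros t u Ht.
  destruct (Rlt_or_le t T) as [L|L]. apply Hlt; lra.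
  assert (tT : t = T) by lra. subst t.
  destruct (Req_dec T 0) as [Z|Z]. { rewrite Z. apply H0. }
  apply Rnot_lt_le. intro K.
  destruct (Hcts T u Ht (v T u - m) ltac:(lra)) as [d [Hd Hd']].
  assert (Hm1 : 0 < Rmin d T) by (apply Rmin_pos; lra).
  assert (Hm2 : Rmin d T <= d) by apply Rmin_l.
  assert (Hm3 : Rmin d T <= T) by apply Rmin_r.
  set (t' := T - Rmin d T / 2).
  specialize (Hd' t' u ltac:(unfold t'; lra) ltac:(unfold t'; rewrite Rabs_left; lra)).
  rewrite Rminus_diag, Rabs_R0 in Hd'. specialize (Hd' Hd). apply Rabs_def2 in Hd'.
  specialize (Hlt t' u ltac:(unfold t'; lra)). lra.
Qed.

Lemma cts0 T f : 0 <= T -> ctsS T f -> forall c, continuity_pt (f 0) c.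
Proof.
  intros HT H c. unfold continuity_pt, continue_in, limit1_in, limit_in.
  intros e He. destruct (H 0 c ltac:(lra) e He) as [d [Hd Hd']].
  exists d. split. exact Hd. intros x [_ Hx]. simpl in *. unfold R_dist in *.
  apply Hd'. lra. rewrite Rminus_diag, Rabs_R0. exact Hd. exact Hx.
Qed.

Theorem mainTheorem3 (alpha T : R) (gam0 : R -> vec3) (th0 : R -> R)
    (gam : R -> R -> vec3) (th : R -> R -> R) :
  0 < alpha -> 0 <= T ->
  (forall u, Rabs (th0 u) < PI / 2) ->
  framed_flow_solution alpha T gam0 th0 gam th ->
  forall t u, 0 <= t <= T -> Rabs (th t u) < PI / 2 /\ 0 < cos (th t u).
Proof.
  intros Ha HT Hth0 Hsol.
  destruct Hsol as [_ [Hper [_ [Hinit [_ [_ [_ [Hc [Hsp [Hreg Hdt]]]]]]]]]].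
  apply slab_eps in Hc.
  pose proof PI_RGT_0 as Hpi.
  assert (Hg : forall t u, 0 < t < T -> 0 < speed gam t u) by (intros; apply Hsp; lra).
  destruct (continuity_ab_maj (th 0) 0 (2 * PI) ltac:(lra) (fun c _ => cts0 T th HT Hc c)) as [Mx [HMx _]].
  destruct (continuity_ab_min (th 0) 0 (2 * PI) ltac:(lra) (fun c _ => cts0 T th HT Hc c)) as [mx [Hmx _]].
  assert (Hup : forall u, th 0 u <= th 0 Mx).
  { intro u. destruct (per_red th Hper 0 u) as [u' [Hu' E]]. rewrite E. apply HMx. exact Hu'. }
  assert (Hlo : forall u, th 0 mx <= th 0 u).
  { intro u. destruct (per_red th Hper 0 u) as [u' [Hu' E]]. rewrite E. apply Hmx. exact Hu'. }
  assert (BM : th 0 Mx < PI / 2).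
  { rewrite Hinit. specialize (Hth0 Mx). apply Rabs_def2 in Hth0. lra. }
  assert (Bm : - (PI / 2) < th 0 mx).
  { rewrite Hinit. specialize (Hth0 mx). apply Rabs_def2 in Hth0. lra. }
  assert (U : forall t u, 0 <= t <= T -> th t u <= th 0 Mx).
  { apply (wmp T alpha (th 0 Mx) th (speed gam) Ha Hper Hc Hg).
    - intros t u Ht. destruct (Hreg t u Ht) as [_ [_ [_ [R1 [_ R3]]]]]. split. exact R1. exact R3.
    - intros t u Ht. exact (proj2 (proj2 (proj2 (Hdt t u Ht)))).
    - exact Hup. }
  assert (Lo : forall t u, 0 <= t <= T -> - th t u <= - th 0 mx).
  { apply (wmp T alpha (- th 0 mx) (fun t u => - th t u) (speed gam) Ha).
    - intros t u. rewrite Hper. reflexivity.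
    - intros t u Ht e He. destruct (Hc t u Ht e He) as [d [Hd Hd']]. exists d. split. exact Hd.
      intros t' u' H1 H2 H3. specialize (Hd' t' u' H1 H2 H3).
      replace (- th t' u' - - th t u) with (- (th t' u' - th t u)) by ring. rewrite Rabs_Ropp. exact Hd'.
    - exact Hg.
    - intros t u Ht. destruct (Hreg t u Ht) as [_ [_ [_ [R1 [_ R3]]]]]. split.
      + exact (ex_derive_opp (th t) u R1).
      + apply ex_derive_ext with (fun u' => - (Derive (th t) u' / speed gam t u')).
        * intro y. rewrite Derive_opp. unfold Rdiv. rewrite Ropp_mult_distr_l. reflexivity.
        * exact (ex_derive_opp _ u R3).
    - intros t u Ht.
      assert (E : Derive (fun u' => Derive (fun x => - th t x) u' / speed gam t u') u
                = - Derive (fun u' => Derive (th t) u' / speed gam t u') u).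
      { rewrite <- Derive_opp. apply Derive_ext. intro y. rewrite Derive_opp.
        unfold Rdiv. rewrite Ropp_mult_distr_l. reflexivity. }
      rewrite E.
      replace (alpha * (- Derive (fun u' => Derive (th t) u' / speed gam t u') u / speed gam t u))
        with (- (alpha * (Derive (fun u' => Derive (th t) u' / speed gam t u') u / speed gam t u))).
      + exact (is_derive_opp _ _ _ (proj2 (proj2 (proj2 (Hdt t u Ht))))).
      + field. apply Rgt_not_eq. apply Hg. exact Ht.
    - intro u. specialize (Hlo u). lra. }
  intros t u Ht. specialize (U t u Ht). specialize (Lo t u Ht).
  assert (A : Rabs (th t u) < PI / 2) by (apply Rabs_def1; lra).
  split. exact A. apply cos_gt_0; lra.
Qed.
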